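(* Let $k$ be a field of characteristic $\neq 2$, and let $W^+=A\wr T^+$ be as described in the context. Then $W^+$ has the presentation with generators $a_1,\dots,a_m,t_1,\dots,t_n,u_1,\dots,u_n$ subject to the finitely many relations $[a_k,t_{j_1},t_{j_2},\dots,t_{j_s},a_l]=0$ for all $k,l\in\{1,\dots,m\}$, $s\ge 0$ and $1\le j_1<j_2<\dots<j_s\le n$ (for $s=0$ this reads $[a_k,a_l]=0$); $[t_i,t_j]=[t_i,u_j]=[u_i,u_j]=0$ for $1\le i,j\le n$; $[a_k,u_l]=[a_k,t_l,t_l]$ for $1\le k\le m$, $1\le l\le n$.
   Context: Left-normed brackets: $[y_1,\dots,y_n]=[[y_1,\dots,y_{n-1}],y_n]$. Let $A$ be an abelian Lie algebra with basis $a_1,\dots,a_m$ and $T$ an abelian Lie algebra with basis $t_1,\dots,t_n$. Let $U=k[t_1,\dots,t_n]$ (the universal enveloping algebra of $T$), regarded as an abelian Lie algebra under $[u,v]=uv-vu$. Let $u_i=t_i^2\in U$ and let $T^+\subset U$ be the $2n$-dimensional abelian Lie subalgebra spanned by $t_1,\dots,t_n,u_1,\dots,u_n$. Let $B$ be the free right $U$-module with basis $a_1,\dots,a_m$, which is a right Lie module for $T^+$ via $T^+\subset U$. Then $W^+=A\wr T^+$ is $B\oplus T^+$ as a vector space with bracket $[b_1+s_1,b_2+s_2]=(b_1s_2-b_2s_1)+[s_1,s_2]$ for $b_i\in B$, $s_i\in T^+$ (so $[s_1,s_2]=0$). In particular $[a_k,u_l]=a_kt_l^2$. *)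

(* Defs.v *)
From HB Require Import structures.
From mathcomp Require Import all_boot all_order all_algebra.
From mathcomp Require Import mpoly.
Set Implicit Arguments. Unset Strict Implicit. Unset Printing Implicit Defensive.
Import GRing.Theory.
Local Open Scope ring_scope.

Record lieAlg (K : fieldType) := LieAlg {
  lie_sort :> lmodType K;
  lie_br : lie_sort -> lie_sort -> lie_sort;
  lie_brDl : forall x y z, lie_br (x + y) z = lie_br x z + lie_br y z;
  lie_brZl : forall (c : K) x y, lie_br (c *: x) y = c *: lie_br x y;
  lie_brDr : forall x y z, lie_br x (y + z) = lie_br x y + lie_br x z;
  lie_brZr : forall (c : K) x y, lie_br x (c *: y) = c *: lie_br x y;
  lie_brxx : forall x, lie_br x x = 0;
  lie_jacobi : forall x y z,
    lie_br x (lie_br y z) + lie_br y (lie_br z x) + lie_br z (lie_br x y) = 0 }.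

Definition lnbr (V : Type) (br : V -> V -> V) (x : V) (ys : seq V) : V :=
  foldl br x ys.

Definition W_relations (K : fieldType) (V : lmodType K) (br : V -> V -> V)
  (m n : nat) (a : 'I_m -> V) (t u : 'I_n -> V) : Prop :=
  [/\ (forall (k l : 'I_m) (js : seq 'I_n),
         sorted (fun i j : 'I_n => (i < j)%N) js ->
         lnbr br (a k) (map t js ++ [:: a l]) = 0),
      (forall i j : 'I_n, br (t i) (t j) = 0 /\ br (t i) (u j) = 0
                           /\ br (u i) (u j) = 0) &
      (forall (k : 'I_m) (l : 'I_n), br (a k) (u l) = lnbr br (a k) [:: t l; t l])].

Definition lie_generated (K : fieldType) (V : lmodType K) (br : V -> V -> V)
  (gen : V -> Prop) : Prop :=
  forall P : V -> Prop,
    P 0 -> (forall x y, P x -> P y -> P (x + y)) ->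
    (forall (c : K) x, P x -> P (c *: x)) ->
    (forall x y, P x -> P y -> P (br x y)) ->
    (forall x, gen x -> P x) -> forall w, P w.

Definition lie_hom (K : fieldType) (V : lmodType K) (br : V -> V -> V)
  (L : lieAlg K) (f : V -> lie_sort L) : Prop :=
  [/\ forall x y, f (x + y) = f x + f y,
      forall (c : K) x, f (c *: x) = c *: f x &
      forall x y, f (br x y) = @lie_br K L (f x) (f y)].

(* (V, br) has the presentation with generators a, t, u and the relations
   W_relations: the generators satisfy the relations, generate V, and
   every Lie algebra with elements satisfying the relations receives a
   Lie homomorphism from V sending generators to those elements.
   (Universal property of the quotient of the free Lie algebra.) *)
Definition has_W_presentation (K : fieldType) (V : lmodType K)
  (br : V -> V -> V) (m n : nat) (a : 'I_m -> V) (t u : 'I_n -> V) : Prop :=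
  [/\ W_relations br a t u,
      lie_generated br (fun w => (exists k, w = a k) \/ (exists i, w = t i)
                                 \/ (exists i, w = u i)) &
      forall (L : lieAlg K) (a' : 'I_m -> lie_sort L) (t' u' : 'I_n -> lie_sort L),
        W_relations (@lie_br K L) a' t' u' ->
        exists f : V -> lie_sort L, [/\ lie_hom br f,
          (forall k, f (a k) = a' k), (forall i, f (t i) = t' i) &
          (forall i, f (u i) = u' i)]].

(* B = U^m (free right U-module on a_1..a_m), U = k[t_1..t_n].
   T^+ has basis t_1..t_n, u_1..u_n; an element sum c_i t_i + d_i u_i is
   stored as the pair of coordinate vectors (c, d).
   W^+ = B (+) T^+. *)
Definition Wplus (K : fieldType) (m n : nat) : lmodType K :=
  ({ffun 'I_m -> {mpoly K[n]}} * ({ffun 'I_n -> K^o} * {ffun 'I_n -> K^o}))%type.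

Definition Tval (K : fieldType) (n : nat) (s : {ffun 'I_n -> K^o} * {ffun 'I_n -> K^o})
  : {mpoly K[n]} :=
  \sum_(i < n) (s.1 i *: 'X_i + s.2 i *: 'X_i ^+ 2).

(* [b1 + s1, b2 + s2] = (b1 s2 - b2 s1) + [s1, s2], with [s1, s2] = 0. *)
Definition Wbr (K : fieldType) (m n : nat) (w1 w2 : Wplus K m n) : Wplus K m n :=
  ([ffun k => w1.1 k * Tval w2.2 - w2.1 k * Tval w1.2], 0).

Definition Wa (K : fieldType) (m n : nat) (k : 'I_m) : Wplus K m n :=
  ([ffun j => if j == k then 1 else 0], 0).
Definition Wt (K : fieldType) (m n : nat) (i : 'I_n) : Wplus K m n :=
  (0, ([ffun j => if j == i then 1 else 0], 0)).
Definition Wu (K : fieldType) (m n : nat) (i : 'I_n) : Wplus K m n :=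
  (0, (0, [ffun j => if j == i then 1 else 0])).

(* Main.v *)
Require Import Defs.
From HB Require Import structures.
From mathcomp Require Import all_boot all_order all_algebra.
From mathcomp Require Import mpoly ssrcomplements zify.
Set Implicit Arguments. Unset Strict Implicit. Unset Printing Implicit Defensive.
Import GRing.Theory.
Local Open Scope ring_scope.

Section LieBasics.
Variables (K : fieldType) (L : lieAlg K).
Local Notation br := (@lie_br K L).

Lemma selfadd (x : L) : x = x + x -> x = 0.
Proof. by move=> h; apply/esym/(addrI x); rewrite addr0 -h. Qed.
Lemma br0l y : br 0 y = 0.
Proof. by apply: selfadd; rewrite -lie_brDl addr0. Qed.
Lemma br0r y : br y 0 = 0.
Proof. by apply: selfadd; rewrite -lie_brDr addr0. Qed.
Lemma brNl x y : br (- x) y = - br x y.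
Proof. by apply/(addrI (br x y)); rewrite -lie_brDl !subrr br0l. Qed.
Lemma brNr x y : br y (- x) = - br y x.
Proof. by apply/(addrI (br y x)); rewrite -lie_brDr !subrr br0r. Qed.
Lemma brBl x y z : br (x - y) z = br x z - br y z.
Proof. by rewrite lie_brDl brNl. Qed.
Lemma brBr x y z : br z (x - y) = br z x - br z y.
Proof. by rewrite lie_brDr brNr. Qed.
Lemma br_anti x y : br x y = - br y x.
Proof.
have := lie_brxx (x + y); rewrite lie_brDl !lie_brDr !lie_brxx add0r addr0.
by move/eqP; rewrite addr_eq0 => /eqP.
Qed.
Lemma br_der x y z : br (br x y) z = br (br x z) y + br x (br y z).
Proof.
have := lie_jacobi x y z.
rewrite [br z (br x y)]br_anti [br y (br z x)]br_anti [br z x]br_anti brNl opprK.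
move=> h. apply/eqP; rewrite -subr_eq0 -oppr0 -h; apply/eqP.
by rewrite opprB [br x _ + _]addrC.
Qed.
Lemma br_suml (I : Type) (r : seq I) (P : pred I) (F : I -> L) y :
  br (\sum_(i <- r | P i) F i) y = \sum_(i <- r | P i) br (F i) y.
Proof. exact: (big_morph (fun x => br x y) (fun a b => lie_brDl a b y) (br0l y)). Qed.
Lemma br_sumr (I : Type) (r : seq I) (P : pred I) (F : I -> L) y :
  br y (\sum_(i <- r | P i) F i) = \sum_(i <- r | P i) br y (F i).
Proof. exact: (big_morph (fun x => br y x) (fun a b => lie_brDr y a b) (br0r y)). Qed.

Lemma two_eq0 (hk : 2%:R != 0 :> K) (x : L) : x = - x -> x = 0.
Proof.
move=> h; have : (2%:R : K) *: x = 0 by rewrite scaler_nat mulr2n {2}h subrr.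
by move/eqP; rewrite scaler_eq0 (negbTE hk) /= => /eqP.
Qed.
End LieBasics.
Section Core.
Variables (K : fieldType) (L : lieAlg K) (m n : nat).
Local Notation br := (@lie_br K L).
Variables (a : 'I_m -> L) (t u : 'I_n -> L).
Hypothesis hk : 2%:R != 0 :> K.
Hypothesis rel : W_relations br a t u.

Definition Dop (i : 'I_n) (x : L) := br x (t i).
Definition Eop (i : 'I_n) (x : L) := br x (u i).
Definition Aop (s : seq 'I_n) (x : L) := foldl (fun y i => Dop i y) x s.

Lemma rel_tt i j : br (t i) (t j) = 0.
Proof. by case: rel => _ /(_ i j) [] . Qed.
Lemma rel_tu i j : br (t i) (u j) = 0.
Proof. by case: rel => _ /(_ i j) [] _ []. Qed.
Lemma rel_au k l : Eop l (a k) = Dop l (Dop l (a k)).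
Proof. by case: rel => _ _ /(_ k l). Qed.

Lemma DopC i j x : Dop i (Dop j x) = Dop j (Dop i x).
Proof. by rewrite /Dop br_der rel_tt br0r addr0. Qed.
Lemma EDop i j x : Eop i (Dop j x) = Dop j (Eop i x).
Proof. by rewrite /Dop /Eop br_der rel_tu br0r addr0. Qed.

Lemma Aop_cat s1 s2 x : Aop (s1 ++ s2) x = Aop s2 (Aop s1 x).
Proof. by rewrite /Aop foldl_cat. Qed.
Lemma Aop_cons i s x : Aop (i :: s) x = Aop s (Dop i x).
Proof. by []. Qed.

Lemma Aop_comm (T : L -> L) : (forall j y, T (Dop j y) = Dop j (T y)) ->
  forall s x, T (Aop s x) = Aop s (T x).
Proof. by move=> hT; elim=> [//|i s IH] x; rewrite !Aop_cons IH hT. Qed.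

Lemma Aop_perm s1 s2 x : perm_eq s1 s2 -> Aop s1 x = Aop s2 x.
Proof.
elim: s1 s2 x => [|i s1 IH] s2 x.
  by rewrite perm_sym => /perm_nilP ->.
move=> hp; have hin : i \in s2 by rewrite -(perm_mem hp) mem_head.
move: hp; case/splitPr: hin => s2a s2b hp.
rewrite Aop_cons Aop_cat Aop_cons (Aop_comm (DopC i)) -Aop_cat.
apply: IH; rewrite -(perm_cons i); apply: perm_trans hp _.
by rewrite -[i :: s2b]cat1s perm_catCA.
Qed.

Lemma nuniq_dup (s : seq 'I_n) : ~~ uniq s -> exists i r, perm_eq s (i :: i :: r).
Proof.
elim: s => [//|x s IH] /=; rewrite negb_and negbK; case/orP.
  by move=> xs; exists x, (rem x s); rewrite perm_cons perm_to_rem.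
move=> /IH [i [r hp]]; exists i, (x :: r).
apply: perm_trans (_ : perm_eq _ (x :: i :: i :: r)) _; first by rewrite perm_cons.
by apply/permPl; exact: (perm_catCA [:: x] [:: i; i] r).
Qed.

Definition psi k l s1 s2 := br (Aop s1 (a k)) (Aop s2 (a l)).

Lemma lnbr_Aop x s y : lnbr br x (map t s ++ [:: y]) = br (Aop s x) y.
Proof. by rewrite /lnbr foldl_cat /=; congr br; elim: s x => //= i s IH x; rewrite IH. Qed.

Lemma psi0_uniq k l s : uniq s -> psi k l [::] s = 0.
Proof.
move=> us; rewrite /psi /=.
set s' := sort (fun i j : 'I_n => (i <= j)%N) s.
have -> : Aop s (a l) = Aop s' (a l) by apply: Aop_perm; rewrite perm_sym perm_sort.
have ss' : sorted (fun i j : 'I_n => (i < j)%N) s'.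
  have := ltn_sorted_uniq_leq (map val s').
  rewrite !sorted_map map_inj_uniq; last exact: val_inj.
  rewrite sort_uniq us /= => ->.
  by apply: sort_sorted => x y; apply: leq_total.
case: rel => h _ _; have := h l k s' ss'.
by rewrite lnbr_Aop => hl; rewrite br_anti hl oppr0.
Qed.

Lemma core N : forall k l s1 s2, (size s1 + size s2 <= N)%N -> psi k l s1 s2 = 0.
Proof.
elim: N => [|N IH] k l s1 s2.
  by case: s1 s2 => [|//] [|//] _; apply: psi0_uniq.
have swap : forall k l i s1 s2, (size s1 + size s2 <= N)%N ->
    psi k l (i :: s1) s2 = - psi k l s1 (i :: s2).
  move=> k' l' i s1' s2' hs; rewrite /psi Aop_cons -(Aop_comm (DopC i)).
  set X := Aop s1' (a k'); set Y := Aop s2' (a l').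
  have h := br_der X Y (t i).
  have hXY : br X Y = 0 by apply: IH.
  rewrite hXY br0l in h.
  apply/eqP; rewrite -subr_eq0 opprK Aop_cons -(Aop_comm (DopC i)) -/Y /Dop -h //.
have red : forall k l s1 s2, (size s1 + size s2 <= N.+1)%N ->
    psi k l [::] (s1 ++ s2) = 0 -> psi k l s1 s2 = 0.
  move=> k' l'; elim=> [//|i s1' IHs] s2' hs h0.
  rewrite swap ?(IHs (i :: s2')) ?oppr0 //.
    by rewrite /= addnS.
  rewrite -h0 /psi; congr br; apply: Aop_perm.
  by rewrite -[i :: s2']cat1s perm_catCA.
have main : forall k l s, (size s <= N.+1)%N -> psi k l [::] s = 0.
  move=> k' l' s hs; have [us|nus] := boolP (uniq s); first exact: psi0_uniq.
  have [i [r hp]] := nuniq_dup nus.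
  have hr : (size s = (size r).+2)%N by rewrite (perm_size hp).
  have hsr : (size r < N)%N by move: hs; rewrite hr.
  have -> : psi k' l' [::] s = psi k' l' [::] (i :: i :: r).
    by rewrite /psi; congr br; apply: Aop_perm.
  apply: (two_eq0 hk).
  have e1 : psi k' l' [::] (i :: i :: r) = - psi k' l' [:: i; i] r.
    rewrite /psi !Aop_cons -rel_au -(Aop_comm (EDop i)).
    set Y := Aop r (a l').
    have h := br_der (a k') Y (u i).
    have hY : br (a k') Y = 0 by apply: (IH k' l' [::] r); exact: ltnW.
    rewrite hY br0l in h.
    apply/eqP; rewrite -subr_eq0 opprK; apply/eqP.
    by rewrite /= -rel_au /Eop addrC -h.
  rewrite {1}e1; congr (- _).
  by rewrite swap // swap ?opprK.
move=> hs; apply: red => //; apply: main; by rewrite size_cat.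
Qed.
End Core.

Definition seqof (n : nat) (mu : 'X_{1..n}) : seq 'I_n :=
  flatten [seq nseq (mu i) i | i <- enum 'I_n].

Lemma count_seqof n (a : pred 'I_n) (mu : 'X_{1..n}) :
  count a (seqof mu) = (\sum_(j < n) a j * mu j)%N.
Proof.
rewrite /seqof count_flatten sumnE !big_map -enumT big_enum /=.
by apply: eq_bigr => j _; rewrite count_nseq.
Qed.

Lemma seqofU n (mu : 'X_{1..n}) i : perm_eq (seqof (mu + U_(i))%MM) (i :: seqof mu).
Proof.
apply/permP => a; rewrite /= !count_seqof.
rewrite (eq_bigr (fun j => a j * mu j + a j * (i == j))%N); last first.
  by move=> j _; rewrite mnmDE mnm1E mulnDr.
rewrite big_split /= addnC; congr (_ + _)%N.
rewrite (bigD1 i) //= eqxx muln1 big1 ?addn0 // => j /negbTE.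
by rewrite eq_sym => ->; rewrite muln0.
Qed.

Lemma seqof0 n : seqof (0%MM : 'X_{1..n}) = [::].
Proof.
rewrite /seqof; elim: (enum 'I_n) => //= j s IH.
by rewrite mnm0E.
Qed.

Section Gdef.
Variables (K : fieldType) (L : lieAlg K) (m n : nat).
Local Notation br := (@lie_br K L).
Variables (a : 'I_m -> L) (t u : 'I_n -> L).
Hypothesis hk : 2%:R != 0 :> K.
Hypothesis rel : W_relations br a t u.

Local Notation Dop := (Dop t).
Local Notation Eop := (Eop u).
Local Notation Aop := (Aop t).

Definition act (mu : 'X_{1..n}) x := Aop (seqof mu) x.
Definition G (p : {mpoly K[n]}) x := \sum_(mu <- msupp p) p@_mu *: act mu x.

Lemma GE p x i : (msize p <= i)%N ->
  G p x = \sum_(mu : 'X_{1..n < i}) p@_mu *: act mu x.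
Proof.
move=> le_pi; set I : subFinType _ := 'X_{1..n < i}.
rewrite /G (big_mksub I) ?msupp_uniq //=; first last.
  by move=> y /msize_mdeg_lt /leq_trans; apply.
rewrite big_rmcond //= => j /memN_msupp_eq0 ->.
by rewrite scale0r.
Qed.

Lemma GD p q x : G (p + q) x = G p x + G q x.
Proof.
set i := maxn (msize (p + q)) (maxn (msize p) (msize q)).
rewrite !(GE x (i := i)); try by rewrite /i !leq_max leqnn ?orbT.
rewrite -big_split /=; apply: eq_bigr => mu _.
by rewrite mcoeffD scalerDl.
Qed.

Lemma GZ c p x : G (c *: p) x = c *: G p x.
Proof.
set i := maxn (msize (c *: p)) (msize p).
rewrite !(GE x (i := i)); try by rewrite /i !leq_max leqnn ?orbT.
rewrite scaler_sumr; apply: eq_bigr => mu _.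
by rewrite mcoeffZ scalerA.
Qed.

Lemma G0 x : G 0 x = 0.
Proof. by rewrite /G msupp0 big_nil. Qed.

Lemma Gsum (I : Type) (r : seq I) (P : pred I) (F : I -> {mpoly K[n]}) x :
  G (\sum_(i <- r | P i) F i) x = \sum_(i <- r | P i) G (F i) x.
Proof. exact: (big_morph (fun p => G p x) (fun p q => GD p q x) (G0 x)). Qed.

Lemma GX mu x : G 'X_[mu] x = act mu x.
Proof. by rewrite /G msuppX big_seq1 mcoeffX eqxx scale1r. Qed.

Lemma G1 x : G 1 x = x.
Proof. by rewrite -mpolyX0 GX /act seqof0. Qed.

Lemma actU mu i x : act (mu + U_(i))%MM x = Dop i (act mu x).
Proof.
rewrite /act (Aop_perm rel _ (seqofU mu i)) Aop_cons.
by rewrite (Aop_comm (DopC rel i)).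
Qed.

Lemma Dop_lin i (r : seq 'X_{1..n}) (c : 'X_{1..n} -> K) (F : 'X_{1..n} -> L) :
  Dop i (\sum_(mu <- r) c mu *: F mu) = \sum_(mu <- r) c mu *: Dop i (F mu).
Proof. rewrite /Dop br_suml; apply: eq_bigr => mu _; exact: lie_brZl. Qed.

Lemma Eop_lin i (r : seq 'X_{1..n}) (c : 'X_{1..n} -> K) (F : 'X_{1..n} -> L) :
  Eop i (\sum_(mu <- r) c mu *: F mu) = \sum_(mu <- r) c mu *: Eop i (F mu).
Proof. rewrite /Eop br_suml; apply: eq_bigr => mu _; exact: lie_brZl. Qed.

Lemma GMX p i x : G (p * 'X_i) x = Dop i (G p x).
Proof.
rewrite {1}[p]mpolyE mulr_suml Gsum [in RHS]/G Dop_lin; apply: eq_bigr => mu _.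
by rewrite -scalerAl -mpolyXD GZ GX actU.
Qed.

Lemma EG p i x : Eop i (G p x) = G p (Eop i x).
Proof.
rewrite /G Eop_lin; apply: eq_bigr => mu _.
by rewrite /act (Aop_comm (EDop rel i)).
Qed.

Lemma DG p i x : Dop i (G p x) = G p (Dop i x).
Proof.
rewrite /G Dop_lin; apply: eq_bigr => mu _.
by rewrite /act (Aop_comm (DopC rel i)).
Qed.

Lemma G_comm p q k l : br (G p (a k)) (G q (a l)) = 0.
Proof.
rewrite /G br_suml big1 // => mu _; rewrite lie_brZl br_sumr big1 ?scaler0 //.
move=> nu _; rewrite lie_brZr /act.
by rewrite (_ : br _ _ = 0) ?scaler0 //; apply: (core hk rel); exact: leqnn.
Qed.
End Gdef.

Section WFacts.
Variables (K : fieldType) (m n : nat).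
Local Notation V := (Wplus K m n).
Local Notation Wbr := (@Wbr K m n).

Lemma TvalE (s : {ffun 'I_n -> K^o} * {ffun 'I_n -> K^o}) :
  Tval s = \sum_(i < n) (s.1 i *: 'X_i + s.2 i *: 'X_i ^+ 2).
Proof. by []. Qed.

Lemma Tval0 : Tval (0 : {ffun 'I_n -> K^o} * {ffun 'I_n -> K^o}) = 0.
Proof. by rewrite /Tval big1 // => i _; rewrite /= !ffunE !scale0r addr0. Qed.

Lemma TvalT (i : 'I_n) : Tval (Wt K m i).2 = 'X_i.
Proof.
rewrite /Tval (bigD1 i) //= big1 ?addr0 => [|j /negbTE hj].
  by rewrite !ffunE eqxx scale1r scale0r addr0.
by rewrite !ffunE hj !scale0r addr0.
Qed.

Lemma TvalU (i : 'I_n) : Tval (Wu K m i).2 = 'X_i ^+ 2.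
Proof.
rewrite /Tval (bigD1 i) //= big1 ?addr0 => [|j /negbTE hj].
  by rewrite !ffunE eqxx scale1r scale0r add0r.
by rewrite !ffunE hj !scale0r addr0.
Qed.

Lemma Wbr2 (x y : V) : (Wbr x y).2 = 0.
Proof. by []. Qed.

Lemma foldl_Wbr2 (x : V) s : x.2 = 0 -> (foldl Wbr x s).2 = 0.
Proof. by elim: s x => //= y s IH x _; apply: IH. Qed.

Definition eB (k : 'I_m) (p : {mpoly K[n]}) : V := ([ffun j => if j == k then p else 0], 0).

Lemma Wbr_eB_T k p (i : 'I_n) : Wbr (eB k p) (Wt K m i) = eB k (p * 'X_i).
Proof.
rewrite /Wbr /eB TvalT /= Tval0; congr pair; apply/ffunP => j; rewrite !ffunE.
by case: (j == k); rewrite ?mul0r ?mulr0 ?subr0.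
Qed.

Lemma foldl_eB k p s :
  foldl Wbr (eB k p) (map (@Wt K m n) s) = eB k (p * \prod_(i <- s) 'X_i).
Proof.
elim: s p => [|i s IH] p /=; first by rewrite big_nil mulr1.
by rewrite Wbr_eB_T IH big_cons mulrA.
Qed.

Lemma Wa_eB k : @Wa K m n k = eB k 1.
Proof. by []. Qed.

Lemma prod_seqof (mu : 'X_{1..n}) : \prod_(i <- seqof mu) 'X_i = 'X_[mu] :> {mpoly K[n]}.
Proof.
rewrite mpolyXE_id /seqof big_flatten big_map big_enum /=.
apply: eq_bigr => i _; elim: (mu i) => [|k IH]; first by rewrite big_nil expr0.
by rewrite /= big_cons IH exprS.
Qed.

Lemma W_rel : W_relations Wbr (@Wa K m n) (@Wt K m n) (@Wu K m n).
Proof.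
split.
- move=> k l js _; rewrite /lnbr foldl_cat /=.
  set X := foldl _ _ _.
  have hX : X.2 = 0 by apply: foldl_Wbr2.
  rewrite /Wbr hX (_ : Tval 0 = 0); last exact: Tval0.
  by congr pair; apply/ffunP => j; rewrite !ffunE !mulr0 subrr.
- move=> i j; split; last split; rewrite /Wbr /=; congr pair; apply/ffunP => q;
  by rewrite !ffunE !mul0r subrr.
- move=> k l; rewrite /lnbr /= Wa_eB !Wbr_eB_T /Wbr TvalU /= Tval0.
  congr pair; apply/ffunP => j; rewrite !ffunE.
  by case: (j == k); rewrite ?mul0r ?mulr0 ?subr0 ?mul1r // expr2.
Qed.

End WFacts.

Section WGen.
Variables (K : fieldType) (m n : nat).
Local Notation V := (Wplus K m n).
Local Notation Wbr := (@Wbr K m n).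

Lemma V_eq (x y : V) : x.1 = y.1 -> x.2.1 = y.2.1 -> x.2.2 = y.2.2 -> x = y.
Proof. by case: x => [? [? ?]]; case: y => [? [? ?]] /= -> -> ->. Qed.

Lemma fst_sum (I : Type) (r : seq I) (F : I -> V) :
  (\sum_(i <- r) F i).1 = \sum_(i <- r) (F i).1.
Proof. exact: (big_morph fst (fun _ _ => erefl) erefl). Qed.
Lemma snd_sum (I : Type) (r : seq I) (F : I -> V) :
  (\sum_(i <- r) F i).2 = \sum_(i <- r) (F i).2.
Proof. exact: (big_morph snd (fun _ _ => erefl) erefl). Qed.
Lemma fst2_sum (I : Type) (r : seq I) (F : I -> V) :
  (\sum_(i <- r) F i).2.1 = \sum_(i <- r) (F i).2.1.
Proof. by rewrite snd_sum; exact: (big_morph fst (fun _ _ => erefl) erefl). Qed.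
Lemma snd2_sum (I : Type) (r : seq I) (F : I -> V) :
  (\sum_(i <- r) F i).2.2 = \sum_(i <- r) (F i).2.2.
Proof. by rewrite snd_sum; exact: (big_morph snd (fun _ _ => erefl) erefl). Qed.

Lemma V_decomp (w : V) :
  w = \sum_(k < m) eB k (w.1 k) +
      \sum_(i < n) (w.2.1 i *: @Wt K m n i + w.2.2 i *: @Wu K m n i).
Proof.
apply: V_eq => /=.
- rewrite !fst_sum; apply/ffunP => j; rewrite ffunE !sum_ffunE.
  rewrite [X in _ + X]big1 ?addr0; last by move=> i _; rewrite /= !ffunE ?scaler0 ?addr0.
  rewrite (bigD1 j) //= big1 ?addr0; first by rewrite ffunE eqxx.
  by move=> i /negbTE hi; rewrite ffunE eq_sym hi.
- rewrite !fst2_sum; apply/ffunP => j; rewrite ffunE !sum_ffunE.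
  rewrite [X in X + _]big1 ?add0r; last by move=> i _; rewrite /= ffunE.
  rewrite (bigD1 j) //= big1 ?addr0; first by rewrite !ffunE eqxx scaler0 addr0; exact: (esym (mulr1 _)).
  by move=> i /negbTE hi; rewrite !ffunE eq_sym hi ?scaler0 ?addr0.
- rewrite !snd2_sum; apply/ffunP => j; rewrite ffunE !sum_ffunE.
  rewrite [X in X + _]big1 ?add0r; last by move=> i _; rewrite /= ffunE.
  rewrite (bigD1 j) //= big1 ?addr0; first by rewrite !ffunE eqxx scaler0 add0r; exact: (esym (mulr1 _)).
  by move=> i /negbTE hi; rewrite !ffunE eq_sym hi ?scaler0 ?addr0.
Qed.

Lemma eB_lin k (p : {mpoly K[n]}) :
  eB k p = \sum_(mu <- msupp p) p@_mu *: eB k 'X_[mu] :> V.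
Proof.
apply: V_eq => /=.
- rewrite fst_sum; apply/ffunP => j; rewrite ffunE sum_ffunE.
  have [->|hj] := eqVneq j k.
    rewrite {1}[p]mpolyE; apply: eq_bigr => mu _; rewrite /= !ffunE.
    by rewrite eqxx.
  by rewrite big1 // => mu _; rewrite /= !ffunE (negbTE hj) scaler0.
- by rewrite fst2_sum big1 // => mu _ /=; rewrite scaler0.
- by rewrite snd2_sum big1 // => mu _ /=; rewrite scaler0.
Qed.

Lemma W_gen : lie_generated Wbr (fun w => (exists k, w = @Wa K m n k) \/
   (exists i, w = @Wt K m n i) \/ (exists i, w = @Wu K m n i)).
Proof.
move=> P P0 PD PZ PB Pg w.
have Psum : forall (I : Type) (r : seq I) (F : I -> V), (forall i, P (F i)) ->
    P (\sum_(i <- r) F i).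
  by move=> I r F hF; apply: big_ind.
have PeB : forall k mu, P (eB k 'X_[mu]).
  move=> k mu; rewrite -[X in eB k X]mul1r -prod_seqof -foldl_eB -Wa_eB.
  have : P (@Wa K m n k) by apply Pg; left; exists k.
  elim: (seqof mu) (@Wa K m n k) => //= i s IH x Px; apply: IH; apply PB => //.
  by apply Pg; right; left; exists i.
rewrite (V_decomp w); apply PD; apply Psum.
  by move=> k; rewrite eB_lin; apply Psum => mu; apply PZ.
move=> i; apply PD; apply PZ; apply Pg; right; [left|right]; by exists i.
Qed.
End WGen.

Section Univ.
Variables (K : fieldType) (m n : nat).
Hypothesis hk : 2%:R != 0 :> K.
Local Notation V := (Wplus K m n).
Local Notation Wbr := (@Wbr K m n).
Variables (L : lieAlg K) (a : 'I_m -> L) (t u : 'I_n -> L).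
Local Notation br := (@lie_br K L).
Hypothesis rel : W_relations br a t u.

Definition fB (b : {ffun 'I_m -> {mpoly K[n]}}) : L := \sum_(k < m) G t (b k) (a k).
Definition fT (s : {ffun 'I_n -> K^o} * {ffun 'I_n -> K^o}) : L :=
  \sum_(i < n) (s.1 i *: t i + s.2 i *: u i).
Definition fW (w : V) : L := fB w.1 + fT w.2.

Lemma GB p q x : G t (p - q) x = G t p x - G t q x.
Proof. by rewrite GD; congr (_ + _); rewrite -[- q]scaleN1r GZ scaleN1r. Qed.

Lemma GT p k s : G t (p * Tval s) (a k) = br (G t p (a k)) (fT s).
Proof.
rewrite /Tval mulr_sumr Gsum /fT br_sumr; apply: eq_bigr => i _.
rewrite mulrDr GD lie_brDr -!scalerAr !GZ lie_brZr lie_brZr; congr (_ + _).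
  by rewrite (GMX rel).
rewrite expr2 mulrA !(GMX rel); congr (_ *: _).
have := EG rel p i (a k); rewrite /Eop => ->.
by rewrite -/(Eop u i (a k)) (rel_au rel) -!(DG rel).
Qed.

Lemma fT_comm s1 s2 : br (fT s1) (fT s2) = 0.
Proof.
rewrite /fT br_suml big1 // => i _; rewrite br_sumr big1 // => j _.
rewrite lie_brDl !lie_brDr !lie_brZl !lie_brZr.
rewrite (rel_tt rel) (rel_tu rel) [br (u i) (t j)]br_anti (rel_tu rel).
have -> : br (u i) (u j) = 0 by case: rel => _ /(_ i j) [_ []].
by rewrite oppr0 !scaler0 !addr0.
Qed.

Lemma fB_comm b1 b2 : br (fB b1) (fB b2) = 0.
Proof.
rewrite /fB br_suml big1 // => k _; rewrite br_sumr big1 // => l _.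
exact: (G_comm hk rel).
Qed.

Lemma fBT b s : br (fB b) (fT s) = fB [ffun k => b k * Tval s].
Proof.
rewrite /fB br_suml; apply: eq_bigr => k _; by rewrite ffunE GT.
Qed.

Lemma fW_hom : lie_hom Wbr fW.
Proof.
split.
- move=> x y; rewrite /fW /fB /fT /=.
  rewrite (eq_bigr (fun k => G t (x.1 k) (a k) + G t (y.1 k) (a k))); last first.
    by move=> k _; rewrite ffunE GD.
  rewrite big_split /=.
  rewrite (_ : \sum_(i < n) _ = \sum_(i < n) (x.2.1 i *: t i + x.2.2 i *: u i) +
      \sum_(i < n) (y.2.1 i *: t i + y.2.2 i *: u i)); first by rewrite addrACA.
  by rewrite -big_split; apply: eq_bigr => i _; rewrite !ffunE !scalerDl addrACA.
- move=> c x; rewrite /fW /fB /fT /= scalerDr !scaler_sumr; congr (_ + _).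
    by apply: eq_bigr => k _; rewrite ffunE GZ.
  by apply: eq_bigr => i _; rewrite !ffunE scalerDr !scalerA.
- move=> x y; rewrite /fW lie_brDl !lie_brDr fB_comm fT_comm add0r addr0.
  rewrite fBT [br (fT _) _]br_anti fBT /=.
  rewrite (_ : fT 0 = 0) ?addr0; last by rewrite /fT big1 // => i _; rewrite !ffunE !scale0r addr0.
  rewrite /fB -sumrB; apply: eq_bigr => k _; by rewrite !ffunE GB.
Qed.

Lemma fW_a k : fW (@Wa K m n k) = a k.
Proof.
rewrite /fW /fT /fB (bigD1 k) //= big1 => [|j /negbTE hj]; last by rewrite ffunE hj G0.
rewrite [X in _ + X]big1 ?ffunE ?eqxx ?G1 ?addr0 // => i _.
by rewrite !ffunE !scale0r addr0.
Qed.

Lemma fW_t i : fW (@Wt K m n i) = t i.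
Proof.
rewrite /fW /fT /fB big1 ?add0r => [|k _]; last by rewrite ffunE G0.
rewrite (bigD1 i) //= big1 => [|j /negbTE hj]; last by rewrite !ffunE hj !scale0r addr0.
by rewrite !ffunE eqxx scale1r scale0r !addr0.
Qed.

Lemma fW_u i : fW (@Wu K m n i) = u i.
Proof.
rewrite /fW /fT /fB big1 ?add0r => [|k _]; last by rewrite ffunE G0.
rewrite (bigD1 i) //= big1 => [|j /negbTE hj]; last by rewrite !ffunE hj !scale0r addr0.
by rewrite !ffunE eqxx scale1r scale0r !add0r addr0.
Qed.
End Univ.

Theorem proposition2 (k : fieldType) (m n : nat) (hk : 2%:R != 0 :> k) :
  has_W_presentation (@Wbr k m n) (@Wa k m n) (@Wt k m n) (@Wu k m n).
Proof.
split; [exact: W_rel | exact: W_gen |].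
move=> L a' t' u' rel; exists (fW a' t' u'); split.
- exact: fW_hom.
- exact: fW_a.
- exact: fW_t.
- exact: fW_u.
Qed.
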